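(* Let $\mathcal{C}$ be a permutation class (resp. polyomino class) and let $\mathcal{M}$ be its canonical $m$-basis. The minimal $m$-bases of $\mathcal{C}$ are exactly the subsets $\mathcal{B}\subseteq\mathcal{M}$ that are minimal for inclusion among subsets satisfying $\mathcal{C}=Av_{\mathfrak{S}}(\mathcal{B})$ (resp. $\mathcal{C}=Av_{\mathfrak{P}}(\mathcal{B})$).
   Context: Binary matrices have entries in $\{0,1\}$; $M'\preccurlyeq M$ (submatrix order) means $M'$ is obtained from $M$ by deleting some rows and/or columns. A permutation $\sigma$ of $\{1,\dots,n\}$ is identified with its permutation matrix ($M_\sigma(i,j)=1$ iff $i=\sigma(j)$); a permutation class is a set of permutations closed under taking submatrices that are permutation matrices (i.e. under taking patterns). A quasi-permutation matrix is a binary matrix with at most one $1$ per row and per column. A polyomino is a finite edge-connected union of unit cells of $\mathbb{Z}^2$ up to translation, identified with the binary matrix of its minimal bounding rectangle ($1$ for cells, $0$ otherwise); a polyomino class is a set of polyominoes closed under taking submatrices that are polyominoes. $Av_{\mathfrak{S}}(\mathcal{M})$ (resp. $Av_{\mathfrak{P}}(\mathcal{M})$) denotes the set of permutations (resp. polyominoes) having no submatrix in $\mathcal{M}$. Write $Av$ for $Av_{\mathfrak{S}}$ (permutation case) or $Av_{\mathfrak{P}}$ (polyomino case). For a class $\mathcal{C}$, $\mathcal{C}^+$ is the set of binary matrices that are submatrices of some element of $\mathcal{C}$; the canonical $m$-basis of $\mathcal{C}$ is the set of $\preccurlyeq$-minimal quasi-permutation matrices (permutation case), resp. binary matrices (polyomino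 case), not in $\mathcal{C}^+$. An $m$-basis of $\mathcal{C}$ is an antichain $\mathcal{M}$ (for $\preccurlyeq$) of matrices with $\mathcal{C}=Av(\mathcal{M})$. A minimal $m$-basis of $\mathcal{C}$ is an $m$-basis $\mathcal{M}$ such that (1) no strict subset $\mathcal{M}'\subsetneq\mathcal{M}$ satisfies $\mathcal{C}=Av(\mathcal{M}')$, and (2) for every $M\in\mathcal{M}$ and every submatrix $M'\preccurlyeq M$, either $M'=M$ or $\mathcal{C}\neq Av\big((\mathcal{M}\setminus\{M\})\cup\{M'\}\big)$. *)

(* Defs.v *)
From mathcomp Require Import all_boot matrix perm.

Set Implicit Arguments. Unset Strict Implicit. Unset Printing Implicit Defensive.

Record bmat := BMat { rows : nat; cols : nat; entry : 'M[bool]_(rows, cols) }.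
Arguments entry : clear implicits.

(* Submatrix order: N is obtained from M by deleting rows and/or columns,
   i.e. N = M restricted to an increasing choice of rows and of columns. *)
Definition submx (N M : bmat) : Prop :=
  exists (f : 'I_(rows N) -> 'I_(rows M)) (g : 'I_(cols N) -> 'I_(cols M)),
    (forall i i' : 'I_(rows N), (i < i')%N -> (f i < f i')%N) /\
    (forall j j' : 'I_(cols N), (j < j')%N -> (g j < g j')%N) /\
    (forall i j, entry N i j = entry M (f i) (g j)).

Definition perm_bmat (n : nat) (s : 'S_n) : bmat :=
  @BMat n n (\matrix_(i < n, j < n) (i == s j)).

Definition is_perm (M : bmat) : Prop := exists n (s : 'S_n), M = perm_bmat s.

Definition quasi_perm (M : bmat) : Prop :=
  (forall i j j', entry M i j -> entry M i j' -> j = j') /\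
  (forall i i' j, entry M i j -> entry M i' j -> i = i').

Definition adjn (a b : nat) : bool := (a.+1 == b) || (b.+1 == a).
Definition cell_adj (M : bmat) : rel ('I_(rows M) * 'I_(cols M)) :=
  fun c d => [&& entry M c.1 c.2, entry M d.1 d.2 &
      ((c.1 == d.1) && adjn c.2 d.2) || ((c.2 == d.2) && adjn c.1 d.1)].

Arguments cell_adj : clear implicits.

(* Polyomino: nonempty edge-connected set of cells, given by the binary matrix of
   its minimal bounding rectangle (so every row and every column contains a 1). *)
Definition polyomino (M : bmat) : Prop :=
  (exists i j, entry M i j) /\
  (forall i, exists j, entry M i j) /\
  (forall j, exists i, entry M i j) /\
  (forall c d : 'I_(rows M) * 'I_(cols M),
      entry M c.1 c.2 -> entry M d.1 d.2 -> connect (cell_adj M) c d).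

Inductive kind := PermK | PolyK.

Definition obj (K : kind) (M : bmat) : Prop :=
  match K with PermK => is_perm M | PolyK => polyomino M end.

(* Matrices considered for the canonical m-basis: quasi-permutation
   matrices, resp. all binary matrices. *)
Definition cand (K : kind) (M : bmat) : Prop :=
  match K with PermK => quasi_perm M | PolyK => True end.

Definition seteq (A B : bmat -> Prop) : Prop := forall x, A x <-> B x.
Definition sub_set (A B : bmat -> Prop) : Prop := forall x, A x -> B x.
Definition strict_sub (A B : bmat -> Prop) : Prop := sub_set A B /\ exists x, B x /\ ~ A x.

Definition is_class (K : kind) (C : bmat -> Prop) : Prop :=
  (forall M, C M -> obj K M) /\
  (forall M N, C M -> obj K N -> submx N M -> C N).

Definition Av (K : kind) (B : bmat -> Prop) : bmat -> Prop :=
  fun P => obj K P /\ forall M, B M -> ~ submx M P.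

Definition Cplus (C : bmat -> Prop) : bmat -> Prop :=
  fun M => exists P, C P /\ submx M P.

Definition canon_mbasis (K : kind) (C : bmat -> Prop) : bmat -> Prop :=
  fun M => [/\ cand K M, ~ Cplus C M &
     forall N, cand K N -> ~ Cplus C N -> submx N M -> N = M].

Definition antichain (B : bmat -> Prop) : Prop :=
  forall M N, B M -> B N -> submx M N -> M = N.

Definition mbasis (K : kind) (C B : bmat -> Prop) : Prop :=
  antichain B /\ seteq C (Av K B).

Definition minimal_mbasis (K : kind) (C B : bmat -> Prop) : Prop :=
  [/\ mbasis K C B,
      (forall B', strict_sub B' B -> ~ seteq C (Av K B')) &
      (forall M, B M -> forall N, submx N M ->
          N = M \/ ~ seteq C (Av K (fun X => (B X /\ X <> M) \/ X = N)))].

(* Main.v *)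
From Stdlib Require Import Classical.
Require Import Defs.
From mathcomp Require Import all_boot matrix perm.

Lemma submx_trans A B C : submx A B -> submx B C -> submx A C.
Proof.
move=> [f1 [g1 [h1 [h2 h3]]]] [f2 [g2 [k1 [k2 k3]]]].
exists (f2 \o f1), (g2 \o g1); split; [|split].
- by move=> i i' H; apply: k1; apply: h1.
- by move=> i i' H; apply: k2; apply: h2.
- by move=> i j /=; rewrite h3 k3.
Qed.

Lemma mono_inj m n (f : 'I_m -> 'I_n) :
  (forall i i' : 'I_m, (i < i')%N -> (f i < f i')%N) -> injective f.
Proof.
move=> hf i i' e; case: (ltngtP i i') => H.
- by have := hf _ _ H; rewrite e ltnn.
- by have := hf _ _ H; rewrite e ltnn.
- exact: val_inj.
Qed.

Lemma submx_perm_quasi N n (s : 'S_n) : submx N (perm_bmat s) -> quasi_perm N.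
Proof.
move=> [f [g [hf [hg he]]]].
have fi := @mono_inj _ _ f hf; have gi := @mono_inj _ _ g hg.
split.
- move=> i j j'; rewrite !he /perm_bmat /= !mxE => /eqP e1 /eqP e2.
  apply: gi; apply: (@perm_inj _ s); by rewrite -e1 -e2.
- move=> i i' j; rewrite !he /perm_bmat /= !mxE => /eqP e1 /eqP e2.
  by apply: fi; rewrite e1 e2.
Qed.

Lemma obj_cand K N P : obj K P -> submx N P -> cand K N.
Proof.
case: K => //= [[n [s ->]]]; exact: submx_perm_quasi.
Qed.

Theorem proposition5 (K : kind) (C : bmat -> Prop) :
  is_class K C ->
  forall B : bmat -> Prop,
    minimal_mbasis K C B <->
    [/\ sub_set B (canon_mbasis K C),
        seteq C (Av K B) &
        (forall B', strict_sub B' B -> ~ seteq C (Av K B'))].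
Proof.
move=> _ B; split.
- move=> [[anti hC] hmin hrep]; split => //.
  move=> M BM.
  have nCM : ~ Cplus C M.
    move=> [P [CP sMP]]; have [_ hP] := (hC P).1 CP; exact: hP M BM sMP.
  split => //.
  + apply: NNPP => ncM.
    apply: (hmin (fun X => B X /\ X <> M)).
      split; first by move=> x [].
      by exists M; split => // [[]].
    move=> P; rewrite hC; split.
    * move=> [oP hP]; split => // X [BX _]; exact: hP.
    * move=> [oP hP]; split => // X BX sXP.
      case: (classic (X = M)) => [eXM|nXM].
        by subst X; apply: ncM; exact: obj_cand oP sXP.
      exact: hP X (conj BX nXM) sXP.
  + move=> N cN nCN sNM.
    case: (hrep M BM N sNM) => // hne; exfalso; apply: hne.
    move=> P; rewrite hC; split.
    * move=> [oP hP]; split => // X [[BX _]|->].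
        exact: hP.
      by move=> sNP; apply: nCN; exists P; split => //; apply/hC.
    * move=> [oP hP]; split => // X BX sXP.
      case: (classic (X = M)) => [eXM|nXM].
        subst X; apply: (hP N (or_intror erefl)); exact: submx_trans sNM sXP.
      exact: hP X (or_introl (conj BX nXM)) sXP.
- move=> [hcan hC hmin]; split => //.
  + split => // M N BM BN sMN.
    have [_ _ h] := hcan N BN.
    have [cM nCM _] := hcan M BM.
    exact: h M cM nCM sMN.
  + move=> M BM N sNM.
    case: (classic (N = M)) => [->|nNM]; [by left | right].
    move=> hC'.
    have [cM nCM hMmin] := hcan M BM.
    have nCN : ~ Cplus C N.
      move=> [P [CP sNP]]; have [_ hP] := (hC' P).1 CP.
      exact: hP N (or_intror erefl) sNP.
    case: (classic (cand K N)) => [cN|ncN].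
      by apply: nNM; exact: hMmin N cN nCN sNM.
    apply: (hmin (fun X => B X /\ X <> M)).
      split; first by move=> x [].
      by exists M; split => // [[]].
    move=> P; rewrite hC'; split.
    * move=> [oP hP]; split => // X HX; exact: hP X (or_introl HX).
    * move=> [oP hP]; split => // X [HX|->] sXP.
        exact: hP X HX sXP.
      by apply: ncN; exact: obj_cand oP sXP.
Qed.
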